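(* Consider the system $\dot x(t)=f(x(t),u(t))$, $y(t)=h(x(t),u(t))$ with $x(t)\in X\subset\mathbb{R}^n$, $u(t)\in U\subset\mathbb{R}^m$, $y(t)\in Y\subset\mathbb{R}^m$, where trajectories remain in $X$ and $Y$, and let $\phi(t,t_0,x_0,u_{t_0:t})$ denote the state at time $t$ from state $x_0$ at time $t_0$ under input $u_{t_0:t}=\{u(\tau):\tau\in[t_0,t]\}$. Let $S:X\to\mathbb{R}_{\ge0}$ with $S(\mathbf{0})=0$ be a storage function, and for $t_1>t_0\ge0$, $x_0\in X$, $u_{t_0:t_1}\subset U$, with $y$ the resulting output and $x_1=\phi(t_1,t_0,x_0,u_{t_0:t_1})$, put $$\psi_\gamma=\frac{\int_{t_0}^{t_1}y^\mathsf{T}y\,dt+(S(x_1)-S(x_0))}{\int_{t_0}^{t_1}u^\mathsf{T}u\,dt},\quad \psi_\nu=\frac{\int_{t_0}^{t_1}u^\mathsf{T}y\,dt-(S(x_1)-S(x_0))}{\int_{t_0}^{t_1}u^\mathsf{T}u\,dt},\quad \psi_\rho=\frac{\int_{t_0}^{t_1}u^\mathsf{T}y\,dt-(S(x_1)-S(x_0))}{\int_{t_0}^{t_1}y^\mathsf{T}y\,dt},$$ defined whenever the denominator is nonzero, and let $\gamma_*^2=\max\psi_\gamma$, $\nu_*=\min\psi_\nu$, $\rho_*=\min\psi_\rho$ over all such $(t_1,t_0,x_0,u_{t_0:t_1})$ with nonzero denominator. Suppose a given input-output profile $(u(t),y(t))$, $t\in[t_o,t_f)$, with state trajectory $x(t)$,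 satisfies $|\tfrac{d}{dt}S(x(t))|\le K_s$ for all $t\in[t_o,t_f)$, for a known constant $K_s$. For $[t_0,t_1)\subseteq[t_o,t_f)$ define $$\hat\psi_\gamma(t_0,t_1)=\frac{\int_{t_0}^{t_1}y^\mathsf{T}y\,dt-K_s(t_1-t_0)}{\int_{t_0}^{t_1}u^\mathsf{T}u\,dt},\ \hat\psi_\nu(t_0,t_1)=\frac{\int_{t_0}^{t_1}u^\mathsf{T}y\,dt+K_s(t_1-t_0)}{\int_{t_0}^{t_1}u^\mathsf{T}u\,dt},\ \hat\psi_\rho(t_0,t_1)=\frac{\int_{t_0}^{t_1}u^\mathsf{T}y\,dt+K_s(t_1-t_0)}{\int_{t_0}^{t_1}y^\mathsf{T}y\,dt},$$ and let $\hat\gamma_*^2=\max\hat\psi_\gamma$, $\hat\nu_*=\min\hat\psi_\nu$, $\hat\rho_*=\min\hat\psi_\rho$, each over the intervals $[t_0,t_1)\subseteq[t_o,t_f)$, $t_0<t_1$, on which the respective denominator is nonzero. Then $\hat\gamma_*^2\le\gamma_*^2$, $\hat\nu_*\ge\nu_*$ and $\hat\rho_*\ge\rho_*$.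
   Context: The quantities $\gamma_*^2,\nu_*,\rho_*$ are the paper's optimal $\mathcal{L}_2$-gain, input feedforward passivity and output feedback passivity indices, expressed through the fractional functions above. *)

(* Defs.v *)
From HB Require Import structures.
From mathcomp Require Import all_boot all_order all_algebra.
From mathcomp Require Import all_classical all_reals all_analysis.
Set Implicit Arguments. Unset Strict Implicit. Unset Printing Implicit Defensive.
Import Order.TTheory GRing.Theory Num.Theory.
Import numFieldNormedType.Exports.
Local Open Scope classical_set_scope.
Local Open Scope ring_scope.

Section Defs.
Variable R : realType.

Definition dotv (m : nat) (a b : 'rV[R]_m) : R := \sum_(i < m) a 0 i * b 0 i.

Definition int_on (t0 t1 : R) (g : R -> R) : R :=
  Rintegral lebesgue_measure `[t0, t1]%classic g.

Definition is_solution (n m : nat) (f : 'rV[R]_n -> 'rV[R]_m -> 'rV[R]_n)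
  (t0 t1 : R) (x : R -> 'rV[R]_n) (u : R -> 'rV[R]_m) : Prop :=
  {within `[t0, t1]%classic, continuous x} /\
  (forall t, t0 < t < t1 -> derivable x t 1 /\ derive1 x t = f (x t) (u t)).

(* admissible data (t1, t0, x0 = x t0, u_{t0:t1}) together with the resulting
   state trajectory x (x t = phi(t,t0,x0,u_{t0:t})) *)
Definition admissible (n m : nat) (X : set 'rV[R]_n) (U Y : set 'rV[R]_m)
  (f : 'rV[R]_n -> 'rV[R]_m -> 'rV[R]_n) (h : 'rV[R]_n -> 'rV[R]_m -> 'rV[R]_m)
  (t0 t1 : R) (x : R -> 'rV[R]_n) (u : R -> 'rV[R]_m) : Prop :=
  0 <= t0 /\ t0 < t1 /\ is_solution f t0 t1 x u /\
  (forall t, t0 <= t <= t1 -> U (u t) /\ X (x t) /\ Y (h (x t) (u t))).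

Section Psi.
Variables (n m : nat) (h : 'rV[R]_n -> 'rV[R]_m -> 'rV[R]_m) (S : 'rV[R]_n -> R).
Variables (t0 t1 : R) (x : R -> 'rV[R]_n) (u : R -> 'rV[R]_m).
Let y t := h (x t) (u t).
Definition int_yy := int_on t0 t1 (fun t => dotv (y t) (y t)).
Definition int_uu := int_on t0 t1 (fun t => dotv (u t) (u t)).
Definition int_uy := int_on t0 t1 (fun t => dotv (u t) (y t)).
Definition psi_gamma := (int_yy + (S (x t1) - S (x t0))) / int_uu.
Definition psi_nu := (int_uy - (S (x t1) - S (x t0))) / int_uu.
Definition psi_rho := (int_uy - (S (x t1) - S (x t0))) / int_yy.
End Psi.

Section Optimal.
Variables (n m : nat) (X : set 'rV[R]_n) (U Y : set 'rV[R]_m).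
Variables (f : 'rV[R]_n -> 'rV[R]_m -> 'rV[R]_n) (h : 'rV[R]_n -> 'rV[R]_m -> 'rV[R]_m).
Variable (S : 'rV[R]_n -> R).

Definition gamma_star2 : \bar R := ereal_sup
  [set z | exists t0 t1 x u, admissible X U Y f h t0 t1 x u /\
     int_uu t0 t1 u <> 0 /\ z = (psi_gamma h S t0 t1 x u)%:E].
Definition nu_star : \bar R := ereal_inf
  [set z | exists t0 t1 x u, admissible X U Y f h t0 t1 x u /\
     int_uu t0 t1 u <> 0 /\ z = (psi_nu h S t0 t1 x u)%:E].
Definition rho_star : \bar R := ereal_inf
  [set z | exists t0 t1 x u, admissible X U Y f h t0 t1 x u /\
     int_yy h t0 t1 x u <> 0 /\ z = (psi_rho h S t0 t1 x u)%:E].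
End Optimal.

Section Hat.
Variables (m : nat) (u y : R -> 'rV[R]_m) (Ks to tf : R).
Definition hint_yy t0 t1 := int_on t0 t1 (fun t => dotv (y t) (y t)).
Definition hint_uu t0 t1 := int_on t0 t1 (fun t => dotv (u t) (u t)).
Definition hint_uy t0 t1 := int_on t0 t1 (fun t => dotv (u t) (y t)).
Definition psihat_gamma t0 t1 := (hint_yy t0 t1 - Ks * (t1 - t0)) / hint_uu t0 t1.
Definition psihat_nu t0 t1 := (hint_uy t0 t1 + Ks * (t1 - t0)) / hint_uu t0 t1.
Definition psihat_rho t0 t1 := (hint_uy t0 t1 + Ks * (t1 - t0)) / hint_yy t0 t1.
Definition gammahat_star2 : \bar R := ereal_sup
  [set z | exists t0 t1, to <= t0 /\ t0 < t1 /\ t1 <= tf /\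
     hint_uu t0 t1 <> 0 /\ z = (psihat_gamma t0 t1)%:E].
Definition nuhat_star : \bar R := ereal_inf
  [set z | exists t0 t1, to <= t0 /\ t0 < t1 /\ t1 <= tf /\
     hint_uu t0 t1 <> 0 /\ z = (psihat_nu t0 t1)%:E].
Definition rhohat_star : \bar R := ereal_inf
  [set z | exists t0 t1, to <= t0 /\ t0 < t1 /\ t1 <= tf /\
     hint_yy t0 t1 <> 0 /\ z = (psihat_rho t0 t1)%:E].
End Hat.
End Defs.

(* Main.v *)
Require Import Defs.
From HB Require Import structures.
From mathcomp Require Import all_boot all_order all_algebra.
From mathcomp Require Import all_classical all_reals all_analysis.
Import Order.TTheory GRing.Theory Num.Theory.
Import numFieldNormedType.Exports.
Local Open Scope classical_set_scope.
Local Open Scope ring_scope.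

Lemma int_on_ge0 (R : realType) (a b : R) (g : R -> R) :
  (forall t, 0 <= g t) -> 0 <= int_on a b g.
Proof. by move=> H; rewrite /int_on; apply: Rintegral_ge0 => t _. Qed.

Lemma dotv_ge0 (R : realType) m (a : 'rV[R]_m) : 0 <= dotv a a.
Proof. by rewrite /dotv; apply: sumr_ge0 => i _; rewrite -expr2 sqr_ge0. Qed.

Lemma div_mono (R : realType) (a b c : R) : 0 <= c -> a <= b -> a / c <= b / c.
Proof. by move=> c0 ab; apply: ler_wpM2r => //; rewrite invr_ge0. Qed.

Theorem lemma2 (R : realType) (n m : nat)
  (X : set 'rV[R]_n) (U Y : set 'rV[R]_m)
  (f : 'rV[R]_n -> 'rV[R]_m -> 'rV[R]_n) (h : 'rV[R]_n -> 'rV[R]_m -> 'rV[R]_m)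
  (S : 'rV[R]_n -> R)
  (HS0 : S 0 = 0) (HSnn : forall z, X z -> 0 <= S z)
  (to tf Ks : R) (x : R -> 'rV[R]_n) (u y : R -> 'rV[R]_m)
  (Hto : 0 <= to)
  (Htraj : is_solution f to tf x u)
  (Hin : forall t, to <= t <= tf -> U (u t) /\ X (x t) /\ Y (y t))
  (Hout : forall t, to <= t <= tf -> y t = h (x t) (u t))
  (HScont : {within `[to, tf]%classic, continuous (S \o x)})
  (HSder : forall t, to < t < tf ->
     derivable (S \o x) t 1 /\ `|derive1 (S \o x) t| <= Ks) :
  (gammahat_star2 u y Ks to tf <= gamma_star2 X U Y f h S)%E /\
  (nu_star X U Y f h S <= nuhat_star u y Ks to tf)%E /\
  (rho_star X U Y f h S <= rhohat_star u y Ks to tf)%E.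
Proof.
have key : forall t0 t1, to <= t0 -> t0 < t1 -> t1 <= tf ->
  [/\ admissible X U Y f h t0 t1 x u,
      int_yy h t0 t1 x u = hint_yy y t0 t1,
      int_uu t0 t1 u = hint_uu u t0 t1,
      int_uy h t0 t1 x u = hint_uy u y t0 t1 &
      `|S (x t1) - S (x t0)| <= Ks * (t1 - t0)].
  move=> t0 t1 h0 h01 h1.
  have sub : forall t, t0 <= t <= t1 -> to <= t <= tf.
    move=> t /andP[a b]; apply/andP; split.
      exact: le_trans h0 a.
    exact: le_trans b h1.
  have subs : `[t0, t1] `<=` `[to, tf].
    move=> t /=; rewrite !in_itv /= => Ht; exact: sub.
  have ssub : forall t, t0 < t < t1 -> to < t < tf.
    move=> t /andP[a b]; apply/andP; split.
      exact: le_lt_trans h0 a.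
    exact: lt_le_trans b h1.
  have eqon : {in `[t0, t1]%classic, (fun t => h (x t) (u t)) =1 y}.
    move=> t Ht; rewrite Hout //; apply: sub; move: Ht; rewrite ?inE /= ?in_itv /=; exact: id.
  split.
  - split; first exact: le_trans Hto h0.
    split => //; split.
      case: Htraj => Hc Hd; split; first exact: continuous_subspaceW Hc.
      by move=> t Ht; apply: Hd; apply: ssub.
    move=> t Ht; have := Hin t (sub t Ht); rewrite (Hout t (sub t Ht)) //.
  - rewrite /int_yy /hint_yy /int_on; apply: eq_Rintegral => t Ht.
    by rewrite (eqon t Ht).
  - by [].
  - rewrite /int_uy /hint_uy /int_on; apply: eq_Rintegral => t Ht.
    by rewrite (eqon t Ht).
  - have Hd : forall t, t \in `]t0, t1[ -> is_derive t 1 (S \o x) (derive1 (S \o x) t).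
      move=> t Ht.
      have Ht' : to < t < tf by apply: ssub; move: Ht; rewrite in_itv.
      have [D _] := HSder t Ht'.
      rewrite derive1E; exact: derivableP.
    have [c Hc ->] := @MVT R (S \o x) (derive1 (S \o x)) t0 t1 h01 Hd
      (continuous_subspaceW subs HScont).
    rewrite normrM (@ger0_norm _ (t1 - t0)); last by rewrite subr_ge0 ltW.
    apply: ler_wpM2r; first by rewrite subr_ge0 ltW.
    have Hc' : to < c < tf by apply: ssub; move: Hc; rewrite in_itv.
    exact: (HSder c Hc').2.
split; last split.
- apply: ge_ereal_sup => z [t0 [t1 [h0 [h01 [h1 [Hnz ->]]]]]].
  have [Had Eyy Euu Euy HS] := key t0 t1 h0 h01 h1.
  apply: le_trans (ereal_sup_ubound _); last first.
    by exists t0, t1, x, u; split; [exact: Had | split; [by rewrite Euu | by []]].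
  rewrite lee_fin /psihat_gamma /psi_gamma Eyy Euu.
  apply: div_mono; first by apply: int_on_ge0 => t; exact: dotv_ge0.
  by rewrite lerD2l; move: HS; rewrite ler_norml => /andP[].
- apply: le_ereal_inf_tmp => z [t0 [t1 [h0 [h01 [h1 [Hnz ->]]]]]].
  have [Had Eyy Euu Euy HS] := key t0 t1 h0 h01 h1.
  apply: (@le_trans _ _ (psi_nu h S t0 t1 x u)%:E).
    apply: ereal_inf_lbound.
    by exists t0, t1, x, u; split; [exact: Had | split; [by rewrite Euu | by []]].
  rewrite lee_fin /psihat_nu /psi_nu Euy Euu.
  apply: div_mono; first by apply: int_on_ge0 => t; exact: dotv_ge0.
  rewrite lerD2l lerNl. move: HS; rewrite ler_norml => /andP[H _]. exact: H.
- apply: le_ereal_inf_tmp => z [t0 [t1 [h0 [h01 [h1 [Hnz ->]]]]]].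
  have [Had Eyy Euu Euy HS] := key t0 t1 h0 h01 h1.
  apply: (@le_trans _ _ (psi_rho h S t0 t1 x u)%:E).
    apply: ereal_inf_lbound.
    by exists t0, t1, x, u; split; [exact: Had | split; [by rewrite Eyy | by []]].
  rewrite lee_fin /psihat_rho /psi_rho Euy Eyy.
  apply: div_mono; first by apply: int_on_ge0 => t; exact: dotv_ge0.
  rewrite lerD2l lerNl. move: HS; rewrite ler_norml => /andP[H _]. exact: H.
Qed.
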